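(* Let $S$ be a nonempty compact (not necessarily convex) set in the plane and fix $0<\alpha<\pi$. Then there exist a point $O$ and two rays $q,r$ emanating from $O$ forming an angle $\alpha$ such that $S$ is contained in the closed convex wedge bounded by $q$ and $r$, $q$ meets the convex hull of $S$ in exactly one point $X$, $r$ meets the convex hull of $S$ in exactly one point $Y$, $X,Y\in S$, and $|OX|=|OY|$. *)

(* Defs.v *)
From Stdlib Require Import Reals.
Open Scope R_scope.

Definition pt := (R * R)%type.

Definition padd (p q : pt) : pt := (fst p + fst q, snd p + snd q).
Definition pscale (t : R) (p : pt) : pt := (t * fst p, t * snd p).
Definition dot (p q : pt) : R := fst p * fst q + snd p * snd q.
Definition norm (p : pt) : R := sqrt (dot p p).
Definition pdist (p q : pt) : R :=
  sqrt ((fst p - fst q) ^ 2 + (snd p - snd q) ^ 2).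

Definition seq_cv (u : nat -> pt) (l : pt) : Prop :=
  forall eps, eps > 0 -> exists N, forall n, (n >= N)%nat -> pdist (u n) l < eps.
Definition closed_set (S : pt -> Prop) : Prop :=
  forall (u : nat -> pt) (l : pt), (forall n, S (u n)) -> seq_cv u l -> S l.
Definition bounded_set (S : pt -> Prop) : Prop :=
  exists M, forall p, S p -> norm p <= M.
(* compact in R^2 = closed and bounded (Heine-Borel) *)
Definition compact_set (S : pt -> Prop) : Prop := closed_set S /\ bounded_set S.

Definition convex_set (C : pt -> Prop) : Prop :=
  forall p q t, C p -> C q -> 0 <= t <= 1 ->
    C (padd (pscale (1 - t) p) (pscale t q)).
Definition conv_hull (S : pt -> Prop) (p : pt) : Prop :=
  forall C, convex_set C -> (forall x, S x -> C x) -> C p.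

Definition ray (O u : pt) (p : pt) : Prop :=
  exists t, 0 <= t /\ p = padd O (pscale t u).
Definition wedge (O u v : pt) (p : pt) : Prop :=
  exists s t, 0 <= s /\ 0 <= t /\ p = padd O (padd (pscale s u) (pscale t v)).

(* Main.v *)
From Coquelicot Require Import Coquelicot.
From Stdlib Require Import Reals Lra Nsatz Psatz.
From Stdlib Require Import ClassicalEpsilon.
Require Import Defs.
Open Scope R_scope.



Lemma abs_le_norm1 (p : pt) : Rabs (fst p) <= norm p.
Proof.
  unfold norm, dot. rewrite <- sqrt_Rsqr_abs. apply sqrt_le_1_alt.
  unfold Rsqr. nra.
Qed.
Lemma abs_le_norm2 (p : pt) : Rabs (snd p) <= norm p.
Proof.
  unfold norm, dot. rewrite <- sqrt_Rsqr_abs. apply sqrt_le_1_alt.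
  unfold Rsqr. nra.
Qed.

Lemma bound_coords (S : pt -> Prop) : bounded_set S ->
  exists M, 0 <= M /\ forall p, S p -> Rabs (fst p) <= M /\ Rabs (snd p) <= M.
Proof.
  intros [M HM]. exists (Rabs M). split. apply Rabs_pos.
  intros p Hp. specialize (HM p Hp).
  pose proof (abs_le_norm1 p). pose proof (abs_le_norm2 p).
  pose proof (Rle_abs M). lra.
Qed.

Lemma dot_bound (M : R) (p : pt) (d1 d2 : R) :
  Rabs (fst p) <= M -> Rabs (snd p) <= M ->
  Rabs (dot p (d1, d2)) <= M * (Rabs d1 + Rabs d2).
Proof.
  intros H1 H2. unfold dot; simpl.
  eapply Rle_trans. apply Rabs_triang.
  rewrite !Rabs_mult.
  assert (0 <= Rabs d1) by apply Rabs_pos.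
  assert (0 <= Rabs d2) by apply Rabs_pos.
  nra.
Qed.

Lemma Rabs_le_betw (x a : R) : Rabs x <= a -> - a <= x <= a.
Proof. unfold Rabs; destruct (Rcase_abs x); lra. Qed.
Lemma Rabs_lt_betw (x a : R) : Rabs x < a -> - a < x < a.
Proof. unfold Rabs; destruct (Rcase_abs x); lra. Qed.

Lemma sq_ident (x y m l2 d1 d2 : R) : d1 * d1 + d2 * d2 = 1 ->
  (x - (m * d1 - l2 * d2)) ^ 2 + (y - (m * d2 + l2 * d1)) ^ 2 =
  (x * d1 + y * d2 - m) * (x * d1 + y * d2 - m) + (x * - d2 + y * d1 - l2) * (x * - d2 + y * d1 - l2).
Proof. intro H.
  match goal with |- ?L = ?R => replace L with (R + (d1 * d1 + d2 * d2 - 1) * (m*m + l2*l2 - x*x - y*y)) by ring end.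
  rewrite H. ring. Qed.

Lemma exists_min (S : pt -> Prop) : (exists p, S p) -> compact_set S ->
  forall d1 d2, d1 * d1 + d2 * d2 = 1 ->
  exists X, S X /\ forall p, S p -> dot X (d1, d2) <= dot p (d1, d2).
Proof.
  intros [p0 Hp0] [Hcl Hbd] d1 d2 Hd.
  destruct (bound_coords S Hbd) as [M [HM0 HM]].
  set (L := M * (Rabs d1 + Rabs d2)).
  set (E := fun r => exists p, S p /\ r = - dot p (d1, d2)).
  assert (HEb : bound E).
  { exists L. intros r [p [Hp ->]]. destruct (HM p Hp) as [H1 H2].
    pose proof (dot_bound M p d1 d2 H1 H2). fold L in H.
    pose proof (Rabs_le_betw _ _ H) as HH. lra. }
  assert (HEn : exists r, E r) by (exists (- dot p0 (d1,d2)); exists p0; auto).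
  destruct (completeness E HEb HEn) as [l [Hub Hleast]].
  set (m := - l).
  assert (Hm : forall p, S p -> m <= dot p (d1, d2)).
  { intros p Hp. assert (E (- dot p (d1,d2))) by (exists p; auto).
    specialize (Hub _ H). unfold m. lra. }
  assert (Happ : forall n : nat, exists p, S p /\ dot p (d1, d2) < m + / (INR n + 1)).
  { intro n. assert (Hpos : 0 < / (INR n + 1)).
    { apply Rinv_0_lt_compat. pose proof (pos_INR n). lra. }
    apply NNPP. intro Hno.
    assert (is_upper_bound E (l - / (INR n + 1))).
    { intros r [p [Hp ->]]. apply Rnot_lt_le. intro Hlt. apply Hno.
      exists p. split; auto. unfold m. lra. }
    specialize (Hleast _ H). lra. }
  set (pn := fun n => proj1_sig (constructive_indefinite_description _ (Happ n))).
  assert (Hpn : forall n, S (pn n) /\ dot (pn n) (d1, d2) < m + / (INR n + 1)).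
  { intro n. unfold pn. destruct (constructive_indefinite_description _ (Happ n)); auto. }
  set (gn := fun n => dot (pn n) (- d2, d1)).
  destruct (Bolzano_Weierstrass gn (fun c => - (M * (Rabs d2 + Rabs d1)) <= c <= M * (Rabs d2 + Rabs d1)))
    as [l2 Hl2].
  { apply compact_P3. }
  { intro n. destruct (Hpn n) as [Hs _]. destruct (HM _ Hs) as [H1 H2].
    pose proof (dot_bound M (pn n) (-d2) d1 H1 H2). rewrite Rabs_Ropp in H.
    unfold gn. apply Rabs_le_betw. exact H. }
  assert (Hsub : forall k : nat, exists n, (k <= n)%nat /\ Rabs (gn n - l2) < / (INR k + 1)).
  { intro k. assert (Hpos : 0 < / (INR k + 1)).
    { apply Rinv_0_lt_compat. pose proof (pos_INR k). lra. }
    destruct (Hl2 (disc l2 (mkposreal _ Hpos)) k) as [n [Hn Hv]].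
    { exists (mkposreal _ Hpos). intros x Hx. exact Hx. }
    exists n. split; auto. }
  set (nk := fun k => proj1_sig (constructive_indefinite_description _ (Hsub k))).
  assert (Hnk : forall k, (k <= nk k)%nat /\ Rabs (gn (nk k) - l2) < / (INR k + 1)).
  { intro k. unfold nk. destruct (constructive_indefinite_description _ (Hsub k)); auto. }
  set (Lp := (m * d1 - l2 * d2, m * d2 + l2 * d1)).
  assert (HLp : S Lp).
  { apply (Hcl (fun k => pn (nk k))).
    { intro k. apply Hpn. }
    intros eps Heps.
    destruct (INR_unbounded (2 / eps)) as [N HN].
    exists N. intros k Hk.
    destruct (Hnk k) as [Hk1 Hk2].
    destruct (Hpn (nk k)) as [Hs Hlt].
    pose proof (Hm _ Hs) as Hge.
    assert (HkN : INR N <= INR k) by (apply le_INR; lia).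
    assert (Hknk : INR k <= INR (nk k)) by (apply le_INR; lia).
    assert (HNpos : 0 < INR N) by (assert (0 < 2/eps) by (apply Rdiv_lt_0_compat; lra); lra).
    set (a := dot (pn (nk k)) (d1, d2) - m).
    set (b := gn (nk k) - l2).
    assert (Hinv1 : / (INR (nk k) + 1) <= / (INR k + 1)).
    { apply Rinv_le_contravar; lra. }
    assert (Hsmall : / (INR k + 1) < eps / 2).
    { apply (Rmult_lt_reg_l (INR k + 1)). lra.
      rewrite Rinv_r by lra.
      assert (2 / eps < INR k + 1) by lra.
      unfold Rdiv in H. apply (Rmult_lt_compat_r (eps/2)) in H; [|lra].
      replace (2 * / eps * (eps / 2)) with 1 in H by (field; lra). lra. }
    assert (Ha : 0 <= a < eps / 2) by (unfold a; lra).
    assert (Hb : Rabs b < eps / 2) by (eapply Rlt_trans; [exact Hk2| lra]).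
    assert (Hsq : (fst (pn (nk k)) - fst Lp) ^ 2 + (snd (pn (nk k)) - snd Lp) ^ 2 = a * a + b * b).
    { unfold a, b, gn, Lp, dot; simpl.
      destruct (pn (nk k)) as [x y]; simpl. apply sq_ident; auto. }
    unfold pdist. rewrite Hsq.
    apply Rlt_le_trans with (sqrt (eps * eps)).
    - apply sqrt_lt_1_alt. split. nra.
      pose proof (Rabs_lt_betw _ _ Hb). nra.
    - rewrite sqrt_square by lra. lra. }
  exists Lp. split; auto.
  intros p Hp. replace (dot Lp (d1, d2)) with m. apply Hm; auto.
  unfold Lp, dot; simpl.
  replace ((m * d1 - l2 * d2) * d1 + (m * d2 + l2 * d1) * d2) with (m * (d1 * d1 + d2 * d2)) by ring.
  rewrite Hd. ring.
Qed.



Definition ee (t : R) : pt := (cos t, sin t).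

Lemma cos_lip (x y : R) : Rabs (cos x - cos y) <= Rabs (x - y).
Proof.
  destruct (MVT_abs cos (fun c => - sin c) y x) as [c [Hc _]].
  { intros; apply derivable_pt_lim_cos. }
  rewrite Hc. pose proof (SIN_bound c). rewrite Rabs_Ropp.
  assert (Rabs (sin c) <= 1) by (unfold Rabs; destruct Rcase_abs; lra).
  pose proof (Rabs_pos (x - y)). nra.
Qed.
Lemma sin_lip (x y : R) : Rabs (sin x - sin y) <= Rabs (x - y).
Proof.
  destruct (MVT_abs sin cos y x) as [c [Hc _]].
  { intros; apply derivable_pt_lim_sin. }
  rewrite Hc. pose proof (COS_bound c).
  assert (Rabs (cos c) <= 1) by (unfold Rabs; destruct Rcase_abs; lra).
  pose proof (Rabs_pos (x - y)). nra.
Qed.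

Definition minprop (S : pt -> Prop) (Xf : R -> pt) :=
  forall t, S (Xf t) /\ forall p, S p -> dot (Xf t) (ee t) <= dot p (ee t).

Definition hs (Xf : R -> pt) (t : R) := dot (Xf t) (ee t).

Lemma hs_le (S : pt -> Prop) Xf : minprop S Xf -> forall t p, S p -> hs Xf t <= dot p (ee t).
Proof. intros H t p Hp. apply (proj2 (H t)); auto. Qed.

Lemma hs_lip (S : pt -> Prop) Xf M : minprop S Xf ->
  (forall p, S p -> Rabs (fst p) <= M /\ Rabs (snd p) <= M) ->
  forall x y, Rabs (hs Xf x - hs Xf y) <= 2 * M * Rabs (x - y).
Proof.
  intros Hm HM.
  assert (K : forall x y, hs Xf x - hs Xf y <= 2 * M * Rabs (x - y)).
  { intros x y. destruct (Hm y) as [Hy _]. pose proof (hs_le S Xf Hm x _ Hy) as H1.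
    destruct (HM _ Hy) as [B1 B2].
    assert (dot (Xf y) (ee x) - hs Xf y <= 2 * M * Rabs (x - y)).
    { unfold hs, dot, ee; simpl.
      replace (fst (Xf y) * cos x + snd (Xf y) * sin x - (fst (Xf y) * cos y + snd (Xf y) * sin y))
        with (fst (Xf y) * (cos x - cos y) + snd (Xf y) * (sin x - sin y)) by ring.
      pose proof (cos_lip x y). pose proof (sin_lip x y).
      eapply Rle_trans. apply Rle_abs. eapply Rle_trans. apply Rabs_triang.
      rewrite !Rabs_mult.
      pose proof (Rabs_pos (cos x - cos y)). pose proof (Rabs_pos (sin x - sin y)).
      pose proof (Rabs_pos (fst (Xf y))). pose proof (Rabs_pos (snd (Xf y))). nra. }
    lra. }
  intros x y. apply Rabs_le. split.
  - specialize (K y x). rewrite <- Rabs_Ropp in K. replace (- (y - x)) with (x - y) in K by ring. lra.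
  - apply K.
Qed.

Lemma lip_cont (f : R -> R) K : 0 <= K -> (forall x y, Rabs (f x - f y) <= K * Rabs (x - y)) ->
  forall x, continuity_pt f x.
Proof.
  intros HK H x. unfold continuity_pt, continue_in, limit1_in, limit_in.
  intros eps Heps. exists (eps / (K + 1)). split.
  { apply Rdiv_lt_0_compat; lra. }
  intros y [_ Hy]. simpl in *. unfold R_dist in *.
  eapply Rle_lt_trans. apply H.
  apply Rle_lt_trans with (K * (eps / (K + 1))).
  { apply Rmult_le_compat_l; lra. }
  apply (Rmult_lt_reg_r (K + 1)). lra.
  replace (K * (eps / (K + 1)) * (K + 1)) with (K * eps) by (field; lra). nra.
Qed.

Lemma hs_eq (S : pt -> Prop) Xf : minprop S Xf -> forall a b, ee a = ee b -> hs Xf a = hs Xf b.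
Proof.
  intros Hm a b E. apply Rle_antisym.
  - pose proof (hs_le S Xf Hm a (Xf b) (proj1 (Hm b))). rewrite E in H. exact H.
  - pose proof (hs_le S Xf Hm b (Xf a) (proj1 (Hm a))). rewrite <- E in H. exact H.
Qed.

Lemma ee_per (t : R) : ee (t + 2 * PI) = ee t.
Proof. unfold ee. rewrite cos_plus, sin_plus, cos_2PI, sin_2PI. f_equal; ring. Qed.

Definition II (Xf : R -> pt) (x : R) := RInt (hs Xf) 0 x.

Lemma cont_c (f : R -> R) : (forall x, continuity_pt f x) -> forall x, continuous f x.
Proof. intros H x. apply continuity_pt_filterlim. apply H. Qed.

Lemma II_deriv (Xf : R -> pt) : (forall x, continuity_pt (hs Xf) x) ->
  forall x, is_derive (II Xf) x (hs Xf x).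
Proof.
  intros Hc x. apply is_derive_RInt with (a := 0).
  - apply filter_forall. intro b. apply RInt_correct. apply ex_RInt_continuous.
    intros; apply cont_c; auto.
  - apply cont_c; auto.
Qed.

Lemma dpl_shift (f : R -> R) (a c l : R) :
  derivable_pt_lim f (c + a) l -> derivable_pt_lim (fun y => f (y + a)) c l.
Proof.
  intros H eps Heps. destruct (H eps Heps) as [d Hd]. exists d. intros h Hh Hh'.
  replace (c + h + a) with (c + a + h) by ring. apply Hd; auto.
Qed.

Lemma II_dpl (Xf : R -> pt) : (forall x, continuity_pt (hs Xf) x) ->
  forall x, derivable_pt_lim (II Xf) x (hs Xf x).
Proof. intros Hc x. apply is_derive_Reals. apply II_deriv; auto. Qed.

Lemma II_per (S : pt -> Prop) Xf : minprop S Xf -> (forall x, continuity_pt (hs Xf) x) ->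
  forall x, II Xf (x + 2 * PI) - II Xf x = II Xf (0 + 2 * PI) - II Xf 0.
Proof.
  intros Hm Hc x.
  assert (D : forall c, derivable_pt_lim (fun y => II Xf (y + 2 * PI) - II Xf y) c 0).
  { intro c.
    replace 0 with (hs Xf (c + 2 * PI) - hs Xf c).
    2:{ rewrite (hs_eq S Xf Hm _ c (ee_per c)). ring. }
    apply (derivable_pt_lim_minus (fun y => II Xf (y + 2 * PI)) (II Xf)).
    - apply dpl_shift. apply II_dpl; auto.
    - apply II_dpl; auto. }
  destruct (MVT_abs (fun y => II Xf (y + 2 * PI) - II Xf y) (fun _ => 0) 0 x) as [c [Hc' _]].
  { intros; apply D. }
  rewrite Rabs_R0, Rmult_0_l in Hc'. apply Rabs_eq_0 in Hc'. lra.
Qed.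

Definition PP (Xf : R -> pt) (A B g : R) (t : R) :=
  A * (hs Xf t + hs Xf (t + g)) - B * (II Xf (t + g) - II Xf t).

Lemma PP_per (S : pt -> Prop) Xf A B g : minprop S Xf -> (forall x, continuity_pt (hs Xf) x) ->
  forall x, PP Xf A B g (x + 2 * PI) = PP Xf A B g x.
Proof.
  intros Hm Hc x. unfold PP.
  rewrite (hs_eq S Xf Hm (x + 2 * PI) x (ee_per x)).
  replace (x + 2 * PI + g) with ((x + g) + 2 * PI) by ring.
  rewrite (hs_eq S Xf Hm ((x + g) + 2 * PI) (x + g) (ee_per _)).
  pose proof (II_per S Xf Hm Hc x). pose proof (II_per S Xf Hm Hc (x + g)).
  replace (II Xf (x + g + 2 * PI) - II Xf (x + 2 * PI)) with (II Xf (x + g) - II Xf x) by lra.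
  reflexivity.
Qed.

Lemma PP_cont (S : pt -> Prop) Xf A B g M : minprop S Xf ->
  (forall p, S p -> Rabs (fst p) <= M /\ Rabs (snd p) <= M) -> 0 <= M ->
  forall x, continuity_pt (PP Xf A B g) x.
Proof.
  intros Hm HM HM0.
  assert (Hc : forall x, continuity_pt (hs Xf) x).
  { apply (lip_cont _ (2 * M)). lra. apply (hs_lip S Xf M Hm HM). }
  assert (Hc1 : forall x, continuity_pt (fun t => hs Xf (t + g)) x).
  { apply (lip_cont _ (2 * M)). lra. intros x y.
    replace (x - y) with ((x + g) - (y + g)) by ring. apply (hs_lip S Xf M Hm HM). }
  assert (Hc2 : forall x, continuity_pt (fun t => II Xf (t + g)) x).
  { intro x. apply derivable_continuous_pt. exists (hs Xf (x + g)).
    apply dpl_shift. apply II_dpl; auto. }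
  assert (Hc3 : forall x, continuity_pt (II Xf) x).
  { intro x. apply derivable_continuous_pt. exists (hs Xf x). apply II_dpl; auto. }
  intro x. unfold PP.
  apply (continuity_pt_minus (fun t => A * (hs Xf t + hs Xf (t + g)))
           (fun t => B * (II Xf (t + g) - II Xf t))).
  - apply (continuity_pt_scal (fun t => hs Xf t + hs Xf (t + g))).
    apply (continuity_pt_plus (hs Xf) (fun t => hs Xf (t + g))); auto.
  - apply (continuity_pt_scal (fun t => II Xf (t + g) - II Xf t)).
    apply (continuity_pt_minus (fun t => II Xf (t + g)) (II Xf)); auto.
Qed.

Lemma PP_locmin (S : pt -> Prop) Xf A B g M : minprop S Xf ->
  (forall p, S p -> Rabs (fst p) <= M /\ Rabs (snd p) <= M) -> 0 <= M ->
  exists tm, forall eps, Rabs eps < PI -> PP Xf A B g tm <= PP Xf A B g (tm + eps).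
Proof.
  intros Hm HM HM0.
  assert (Hc : forall x, continuity_pt (hs Xf) x).
  { apply (lip_cont _ (2 * M)). lra. apply (hs_lip S Xf M Hm HM). }
  destruct (continuity_ab_min (PP Xf A B g) 0 (2 * PI)) as [tm [Hmin Htm]].
  { pose proof PI_RGT_0. lra. }
  { intros; eapply PP_cont; eauto. }
  exists tm. intros eps Heps. pose proof PI_RGT_0.
  apply Rabs_lt_betw in Heps.
  destruct (Rle_lt_dec 0 (tm + eps)) as [H1|H1].
  - destruct (Rle_lt_dec (tm + eps) (2 * PI)) as [H2|H2].
    + apply Hmin; lra.
    + replace (tm + eps) with ((tm + eps - 2 * PI) + 2 * PI) by ring.
      rewrite (PP_per S Xf A B g Hm Hc (tm + eps - 2 * PI)).
      apply Hmin; lra.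
  - rewrite <- (PP_per S Xf A B g Hm Hc (tm + eps)). apply Hmin; lra.
Qed.

Lemma deriv_min0 (f : R -> R) l r : 0 < r -> derivable_pt_lim f 0 l ->
  (forall e, Rabs e < r -> f 0 <= f e) -> l = 0.
Proof.
  intros Hr Hd Hmin.
  destruct (Rtotal_order l 0) as [Hl|[Hl|Hl]]; auto; exfalso.
  - destruct (Hd (- l / 2)) as [[d Hdp] Hd']. lra.
    set (h := Rmin d r / 2).
    assert (Hh2 : h < d /\ h < r /\ 0 < h) by (unfold h; unfold Rmin; destruct Rle_dec; simpl in *; lra).
    specialize (Hd' h). simpl in Hd'.
    assert (h <> 0) by lra.
    assert (Rabs h < d) by (rewrite Rabs_pos_eq; lra).
    specialize (Hd' H H0). apply Rabs_lt_betw in Hd'.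
    rewrite Rplus_0_l in Hd'.
    assert (f 0 <= f h) by (apply Hmin; rewrite Rabs_pos_eq; lra).
    assert (0 <= (f h - f 0) / h) by (apply Rdiv_le_0_compat; lra). lra.
  - destruct (Hd (l / 2)) as [[d Hdp] Hd']. lra.
    set (h := - (Rmin d r / 2)).
    assert (Hh2 : - h < d /\ - h < r /\ 0 < - h) by (unfold h; unfold Rmin; destruct Rle_dec; simpl in *; lra).
    specialize (Hd' h). simpl in Hd'.
    assert (h <> 0) by lra.
    assert (Rabs h < d) by (rewrite Rabs_left; lra).
    specialize (Hd' H H0). apply Rabs_lt_betw in Hd'.
    rewrite Rplus_0_l in Hd'.
    assert (f 0 <= f h) by (apply Hmin; rewrite Rabs_left; lra).
    assert ((f h - f 0) / h <= 0).
    { unfold Rdiv. replace ((f h - f 0) * / h) with (- ((f h - f 0) * / (- h))) by (field; lra).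
      assert (0 <= (f h - f 0) * / (- h)) by (apply Rdiv_le_0_compat; lra). lra. }
    lra.
Qed.

Lemma Qzero (S : pt -> Prop) Xf A B g M : minprop S Xf ->
  (forall p, S p -> Rabs (fst p) <= M /\ Rabs (snd p) <= M) -> 0 <= M -> 0 < A ->
  forall tm, (forall eps, Rabs eps < PI -> PP Xf A B g tm <= PP Xf A B g (tm + eps)) ->
  forall X Y, S X -> S Y -> dot X (ee tm) = hs Xf tm -> dot Y (ee (tm + g)) = hs Xf (tm + g) ->
  A * ((- fst X * sin tm + snd X * cos tm) + (- fst Y * sin (tm + g) + snd Y * cos (tm + g)))
   - B * (hs Xf (tm + g) - hs Xf tm) = 0.
Proof.
  intros Hm HM HM0 HA tm Hloc X Y HX HY EX EY.
  assert (Hc : forall x, continuity_pt (hs Xf) x).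
  { apply (lip_cont _ (2 * M)). lra. apply (hs_lip S Xf M Hm HM). }
  set (F := fun e => A * ((fst X * cos (tm + e) + snd X * sin (tm + e)) +
                          (fst Y * cos (tm + g + e) + snd Y * sin (tm + g + e)))
                     - B * (II Xf (tm + g + e) - II Xf (tm + e))).
  apply (deriv_min0 F _ PI PI_RGT_0).
  - apply is_derive_Reals. unfold F. auto_derive.
    + split. exists (hs Xf (tm + g + 0)). apply II_deriv; auto.
      split. exists (hs Xf (tm + 0)). apply II_deriv; auto. auto.
    + change (fun x : R => II Xf x) with (II Xf).
      rewrite (is_derive_unique _ _ _ (II_deriv Xf Hc (tm + g + 0))).
      rewrite (is_derive_unique _ _ _ (II_deriv Xf Hc (tm + 0))).
      rewrite !Rplus_0_r. ring.
  - intros e He. apply Rle_trans with (PP Xf A B g tm).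
    + unfold F, PP. rewrite !Rplus_0_r.
      unfold dot, ee in EX, EY; simpl in EX, EY. rewrite EX, EY.
      right; ring.
    + specialize (Hloc e He). eapply Rle_trans. apply Hloc.
      unfold F, PP. replace (tm + e + g) with (tm + g + e) by ring.
      pose proof (hs_le S Xf Hm (tm + e) X HX). pose proof (hs_le S Xf Hm (tm + g + e) Y HY).
      unfold dot, ee in *; simpl in *. nra.
Qed.



Lemma alg_key (A B c1 s1 c2 s2 x1 x2 y1 y2 h1 h2 : R) :
  c2 = c1 * (B * B - A * A) - s1 * (2 * B * A) ->
  s2 = s1 * (B * B - A * A) + c1 * (2 * B * A) ->
  A * A + B * B = 1 ->
  h1 = x1 * c1 + x2 * s1 -> h2 = y1 * c2 + y2 * s2 ->
  A * ((- x1 * s1 + x2 * c1) + (- y1 * s2 + y2 * c2)) - B * (h2 - h1) = 0 ->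
  x1 * c2 + x2 * s2 - h2 = y1 * c1 + y2 * s1 - h1.
Proof. intros. nsatz. Qed.

Lemma alg_uniq (c1 s1 x1 x2 y1 y2 : R) : c1 * c1 + s1 * s1 = 1 ->
  x1 * c1 + x2 * s1 = y1 * c1 + y2 * s1 -> - x1 * s1 + x2 * c1 = - y1 * s1 + y2 * c1 ->
  (x1, x2) = (y1, y2).
Proof. intros. f_equal; nsatz. Qed.

Lemma decomp (c1 s1 c2 s2 k o1 o2 p1 p2 : R) : k = c1 * s2 - s1 * c2 -> k <> 0 ->
  (p1, p2) = padd (o1, o2) (padd (pscale (((p1 - o1) * c2 + (p2 - o2) * s2) / k) (- s1, c1))
                                 (pscale (((p1 - o1) * c1 + (p2 - o2) * s1) / k) (s2, - c2))).
Proof. intros Hk Hk0. unfold padd, pscale; simpl. f_equal; subst k; field; auto. Qed.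

Lemma conv_unique (S : pt -> Prop) (X e : pt) :
  (forall q, S q -> dot X e <= dot q e) -> (forall q, S q -> dot q e = dot X e -> q = X) ->
  forall p, conv_hull S p -> dot p e = dot X e -> p = X.
Proof.
  intros Hmin Hun p Hp Ep.
  set (C := fun q => dot X e < dot q e \/ q = X).
  assert (HC : C p).
  { apply Hp.
    - intros q1 q2 t Hq1 Hq2 Ht. unfold C in *.
      destruct (Req_dec t 0) as [Ht0|Ht0].
      + subst t. destruct Hq1 as [H1|H1].
        * left. destruct q1, q2; unfold dot, padd, pscale in *; simpl in *. nra.
        * right. subst q1. destruct X, q2; unfold padd, pscale; simpl. f_equal; ring.
      + destruct Hq2 as [H2|H2].
        * destruct Hq1 as [H1|H1].
          -- left. destruct q1, q2; unfold dot, padd, pscale in *; simpl in *. nra.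
          -- subst q1. left. destruct X, q2; unfold dot, padd, pscale in *; simpl in *.
             assert (0 < t) by lra. nra.
        * subst q2. destruct Hq1 as [H1|H1].
          -- destruct (Req_dec t 1) as [Ht1|Ht1].
             ++ right. subst t. destruct X, q1; unfold padd, pscale; simpl. f_equal; ring.
             ++ left. destruct q1, X; unfold dot, padd, pscale in *; simpl in *.
                assert (0 < 1 - t) by lra. nra.
          -- subst q1. right. destruct X; unfold padd, pscale; simpl. f_equal; ring.
    - intros x Hx. destruct (Rle_lt_or_eq_dec _ _ (Hmin x Hx)) as [H|H].
      + left; auto.
      + right. apply Hun; auto. }
  destruct HC as [H|H]; auto. lra.
Qed.

Lemma pdist_ray (o1 o2 s a b : R) : 0 <= s -> a * a + b * b = 1 ->
  pdist (o1, o2) (padd (o1, o2) (pscale s (a, b))) = s.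
Proof.
  intros Hs Hab. unfold pdist, padd, pscale; cbn [fst snd].
  replace ((o1 - (o1 + s * a)) ^ 2 + (o2 - (o2 + s * b)) ^ 2) with (Rsqr s).
  apply sqrt_Rsqr; auto.
  unfold Rsqr. replace (s * s) with (s * s * (a * a + b * b)) at 1 by (rewrite Hab; ring). ring.
Qed.

Lemma decomp_u (c1 s1 c2 s2 k o1 o2 p1 p2 : R) : k = c1 * s2 - s1 * c2 -> k <> 0 ->
  (p1 - o1) * c1 + (p2 - o2) * s1 = 0 ->
  (p1, p2) = padd (o1, o2) (pscale (((p1 - o1) * c2 + (p2 - o2) * s2) / k) (- s1, c1)).
Proof.
  intros Hk Hk0 E. pose proof (decomp c1 s1 c2 s2 k o1 o2 p1 p2 Hk Hk0) as D.
  rewrite E in D. unfold padd, pscale in *; cbn [fst snd] in *.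
  injection D as D1 D2. f_equal.
  - rewrite D1 at 1. unfold Rdiv. ring.
  - rewrite D2 at 1. unfold Rdiv. ring.
Qed.

Lemma decomp_v (c1 s1 c2 s2 k o1 o2 p1 p2 : R) : k = c1 * s2 - s1 * c2 -> k <> 0 ->
  (p1 - o1) * c2 + (p2 - o2) * s2 = 0 ->
  (p1, p2) = padd (o1, o2) (pscale (((p1 - o1) * c1 + (p2 - o2) * s1) / k) (s2, - c2)).
Proof.
  intros Hk Hk0 E. pose proof (decomp c1 s1 c2 s2 k o1 o2 p1 p2 Hk Hk0) as D.
  rewrite E in D. unfold padd, pscale in *; cbn [fst snd] in *.
  injection D as D1 D2. f_equal.
  - rewrite D1 at 1. unfold Rdiv. ring.
  - rewrite D2 at 1. unfold Rdiv. ring.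
Qed.



Theorem mainTheorem4 (S : pt -> Prop) (alpha : R) :
  (exists p, S p) -> compact_set S -> 0 < alpha < PI ->
  exists (O u v X Y : pt),
    norm u = 1 /\ norm v = 1 /\ dot u v = cos alpha /\
    (forall p, S p -> wedge O u v p) /\
    (forall p, (ray O u p /\ conv_hull S p) <-> p = X) /\
    (forall p, (ray O v p /\ conv_hull S p) <-> p = Y) /\
    S X /\ S Y /\
    pdist O X = pdist O Y.
Proof.
  intros Hne Hcomp Halpha.
  pose proof Hcomp as [Hcl Hbd].
  destruct (bound_coords S Hbd) as [M [HM0 HM]].
  assert (Htrig : forall t, cos t * cos t + sin t * sin t = 1).
  { intro t. pose proof (sin2_cos2 t). unfold Rsqr in H. lra. }
  assert (Hex : forall t, exists X, S X /\ forall p, S p -> dot X (ee t) <= dot p (ee t)).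
  { intro t. unfold ee. apply exists_min; auto. }
  pose (Xf := fun t => proj1_sig (constructive_indefinite_description _ (Hex t))).
  assert (Hm : minprop S Xf).
  { intro t. unfold Xf. destruct (constructive_indefinite_description _ (Hex t)); auto. }
  pose (A := cos (alpha / 2)). pose (Bb := sin (alpha / 2)).
  assert (HA : 0 < A). { unfold A. apply cos_gt_0; lra. }
  assert (HB : 0 < Bb). { unfold Bb. apply sin_gt_0; lra. }
  pose (g := PI - alpha).
  destruct (PP_locmin S Xf A Bb g M Hm HM HM0) as [tm Htm].
  pose proof (Qzero S Xf A Bb g M Hm HM HM0 HA tm Htm) as HQ.
  assert (Hcg : cos g = Bb * Bb - A * A).
  { unfold g, A, Bb. rewrite cos_minus, cos_PI, sin_PI.
    replace (cos alpha) with (cos (2 * (alpha / 2))) by (f_equal; field). rewrite cos_2a. ring. }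
  assert (Hsg : sin g = 2 * Bb * A).
  { unfold g, A, Bb. rewrite sin_minus, cos_PI, sin_PI.
    replace (sin alpha) with (sin (2 * (alpha / 2))) by (f_equal; field). rewrite sin_2a. ring. }
  assert (Hsa : 0 < sin alpha) by (apply sin_gt_0; lra).
  assert (Hsg' : sin g = sin alpha).
  { unfold g. rewrite sin_minus, cos_PI, sin_PI. ring. }
  assert (Hcg' : cos g = - cos alpha).
  { unfold g. rewrite cos_minus, cos_PI, sin_PI. ring. }
  assert (HAB : A * A + Bb * Bb = 1).
  { unfold A, Bb. apply Htrig. }
  assert (Hc2 : cos (tm + g) = cos tm * (Bb * Bb - A * A) - sin tm * (2 * Bb * A)).
  { rewrite cos_plus, Hcg, Hsg. ring. }
  assert (Hs2 : sin (tm + g) = sin tm * (Bb * Bb - A * A) + cos tm * (2 * Bb * A)).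
  { rewrite sin_plus, Hcg, Hsg. ring. }
  pose (k := cos tm * sin (tm + g) - sin tm * cos (tm + g)).
  assert (Hk : k = sin alpha).
  { unfold k. rewrite <- Hsg'. rewrite sin_plus. 
    replace (cos tm * (sin tm * cos g + cos tm * sin g) - sin tm * cos (tm + g))
      with (cos tm * (sin tm * cos g + cos tm * sin g) - sin tm * (cos tm * cos g - sin tm * sin g))
      by (rewrite cos_plus; ring).
    pose proof (Htrig tm). nsatz. }
  assert (Hk0 : k <> 0) by lra.
  pose (h1 := hs Xf tm). pose (h2 := hs Xf (tm + g)).
  assert (HuX : forall q, S q -> dot q (ee tm) = dot (Xf tm) (ee tm) -> q = Xf tm).
  { intros q Hq E.
    pose proof (HQ q (Xf (tm + g)) Hq (proj1 (Hm _)) E eq_refl) as Q1.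
    pose proof (HQ (Xf tm) (Xf (tm + g)) (proj1 (Hm _)) (proj1 (Hm _)) eq_refl eq_refl) as Q2.
    assert (E2 : - fst q * sin tm + snd q * cos tm = - fst (Xf tm) * sin tm + snd (Xf tm) * cos tm).
    { apply (Rmult_eq_reg_l A); [|lra]. lra. }
    rewrite (surjective_pairing q), (surjective_pairing (Xf tm)).
    apply (alg_uniq (cos tm) (sin tm)); auto.
    all: try (unfold dot, ee in E; simpl in E; exact E). }
  assert (HuY : forall q, S q -> dot q (ee (tm + g)) = dot (Xf (tm + g)) (ee (tm + g)) -> q = Xf (tm + g)).
  { intros q Hq E.
    pose proof (HQ (Xf tm) q (proj1 (Hm _)) Hq eq_refl E) as Q1.
    pose proof (HQ (Xf tm) (Xf (tm + g)) (proj1 (Hm _)) (proj1 (Hm _)) eq_refl eq_refl) as Q2.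
    assert (E2 : - fst q * sin (tm + g) + snd q * cos (tm + g) =
                 - fst (Xf (tm + g)) * sin (tm + g) + snd (Xf (tm + g)) * cos (tm + g)).
    { apply (Rmult_eq_reg_l A); [|lra]. lra. }
    rewrite (surjective_pairing q), (surjective_pairing (Xf (tm + g))).
    apply (alg_uniq (cos (tm + g)) (sin (tm + g))); auto.
    all: try (unfold dot, ee in E; simpl in E; exact E). }
  pose proof (HQ (Xf tm) (Xf (tm + g)) (proj1 (Hm _)) (proj1 (Hm _)) eq_refl eq_refl) as HQ0.
  pose (O := ((h2 * (- sin tm) + h1 * sin (tm + g)) / k, (h2 * cos tm + h1 * (- cos (tm + g))) / k)).
  assert (HO1 : dot O (ee tm) = h1).
  { unfold O, dot, ee; cbn [fst snd]. unfold k in *. field. auto. }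
  assert (HO2 : dot O (ee (tm + g)) = h2).
  { unfold O, dot, ee; cbn [fst snd]. unfold k in *. field. auto. }
  assert (Hh1 : h1 = dot (Xf tm) (ee tm)) by reflexivity.
  assert (Hh2 : h2 = dot (Xf (tm + g)) (ee (tm + g))) by reflexivity.
  assert (Hkpos : 0 < k) by lra.
  set (sX := ((fst (Xf tm) - fst O) * cos (tm + g) + (snd (Xf tm) - snd O) * sin (tm + g)) / k).
  set (tY := ((fst (Xf (tm + g)) - fst O) * cos tm + (snd (Xf (tm + g)) - snd O) * sin tm) / k).
  assert (HsX : 0 <= sX).
  { unfold sX. apply Rdiv_le_0_compat; auto.
    pose proof (hs_le S Xf Hm (tm + g) (Xf tm) (proj1 (Hm _))). fold h2 in H.
    unfold dot, ee in H, HO2; cbn [fst snd] in H, HO2. lra. }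
  assert (HtY : 0 <= tY).
  { unfold tY. apply Rdiv_le_0_compat; auto.
    pose proof (hs_le S Xf Hm tm (Xf (tm + g)) (proj1 (Hm _))). fold h1 in H.
    unfold dot, ee in H, HO1; cbn [fst snd] in H, HO1. lra. }
  assert (EXd : Xf tm = padd O (pscale sX (- sin tm, cos tm))).
  { rewrite (surjective_pairing (Xf tm)) at 1. unfold sX.
    apply (decomp_u (cos tm) (sin tm) (cos (tm + g)) (sin (tm + g)) k (fst O) (snd O)); auto.
    rewrite Hh1 in HO1. unfold dot, ee in HO1; cbn [fst snd] in HO1. lra. }
  assert (EYd : Xf (tm + g) = padd O (pscale tY (sin (tm + g), - cos (tm + g)))).
  { rewrite (surjective_pairing (Xf (tm + g))) at 1. unfold tY.
    apply (decomp_v (cos tm) (sin tm) (cos (tm + g)) (sin (tm + g)) k (fst O) (snd O)); auto.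
    rewrite Hh2 in HO2. unfold dot, ee in HO2; cbn [fst snd] in HO2. lra. }
  exists O, (- sin tm, cos tm), (sin (tm + g), - cos (tm + g)), (Xf tm), (Xf (tm + g)).
  split; [|split; [|split; [|split; [|split; [|split; [|split; [|split]]]]]]].
  - unfold norm, dot; cbn [fst snd].
    replace (- sin tm * - sin tm + cos tm * cos tm) with 1 by (rewrite <- (Htrig tm); ring).
    apply sqrt_1.
  - unfold norm, dot; cbn [fst snd].
    replace (sin (tm + g) * sin (tm + g) + - cos (tm + g) * - cos (tm + g)) with 1
      by (rewrite <- (Htrig (tm + g)); ring).
    apply sqrt_1.
  - unfold dot; cbn [fst snd].
    assert (E : cos (tm + g) * cos tm + sin (tm + g) * sin tm = cos g)
      by (rewrite <- cos_minus; f_equal; ring).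
    rewrite Hcg' in E. lra.
  - intros [p1 p2] Hp.
    exists (((p1 - fst O) * cos (tm + g) + (p2 - snd O) * sin (tm + g)) / k),
           (((p1 - fst O) * cos tm + (p2 - snd O) * sin tm) / k).
    split; [|split].
    + apply Rdiv_le_0_compat; auto.
      pose proof (hs_le S Xf Hm (tm + g) (p1, p2) Hp). fold h2 in H.
      unfold dot, ee in H, HO2; cbn [fst snd] in H, HO2. lra.
    + apply Rdiv_le_0_compat; auto.
      pose proof (hs_le S Xf Hm tm (p1, p2) Hp). fold h1 in H.
      unfold dot, ee in H, HO1; cbn [fst snd] in H, HO1. lra.
    + apply (decomp (cos tm) (sin tm) (cos (tm + g)) (sin (tm + g)) k (fst O) (snd O)); auto.
  - intro p. split.
    + intros [[t [Ht Hp]] Hch].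
      apply (conv_unique S (Xf tm) (ee tm)); auto.
      * apply (proj2 (Hm tm)).
      * subst p. rewrite <- Hh1, <- HO1. unfold dot, padd, pscale, ee; cbn [fst snd]. ring.
    + intros ->. split.
      * exists sX. split; auto.
      * intros C _ HS. apply HS. apply (proj1 (Hm _)).
  - intro p. split.
    + intros [[t [Ht Hp]] Hch].
      apply (conv_unique S (Xf (tm + g)) (ee (tm + g))); auto.
      * apply (proj2 (Hm _)).
      * subst p. rewrite <- Hh2, <- HO2. unfold dot, padd, pscale, ee; cbn [fst snd]. ring.
    + intros ->. split.
      * exists tY. split; auto.
      * intros C _ HS. apply HS. apply (proj1 (Hm _)).
  - apply (proj1 (Hm _)).
  - apply (proj1 (Hm _)).
  - rewrite EXd. rewrite EYd.
    rewrite (surjective_pairing O).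
    rewrite !pdist_ray; auto.
    2:{ rewrite <- (Htrig (tm + g)). ring. }
    2:{ rewrite <- (Htrig tm). ring. }
    unfold sX, tY. f_equal.
    rewrite Hh1 in HO1. rewrite Hh2 in HO2.
    unfold dot, ee in HO1, HO2, HQ0; cbn [fst snd] in HO1, HO2, HQ0.
    unfold hs, dot, ee in HQ0; cbn [fst snd] in HQ0.
    pose proof (alg_key A Bb (cos tm) (sin tm) (cos (tm + g)) (sin (tm + g))
      (fst (Xf tm)) (snd (Xf tm)) (fst (Xf (tm + g))) (snd (Xf (tm + g)))
      _ _ Hc2 Hs2 HAB eq_refl eq_refl HQ0) as K.
    lra.
Qed.
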